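(* Let $P$ and $Q$ be finite posets and let $P+Q$ be their disjoint union, labeled by a bijection $\omega:P+Q\to[n]$, where $n=|P+Q|$ and $p=|P|$. Fix $s\in P$ such that $\omega(s)>\omega(t)$ for all $t\in Q$. Then $$(1-q^n)\,G_{P+Q;s}(q)=(1-q^p)\,G_{P;s}(q)\,G_Q(q).$$
   Context: $\mathbb{N}=\{0,1,2,\dots\}$. For a poset $R$ with an injective labeling $\omega_R:R\to\mathbb{Z}$, an $(R,\omega_R)$-partition is a map $f:R\to\mathbb{N}$ with $f(x)\ge f(y)$ whenever $x\le y$, and $f(x)>f(y)$ whenever $x\le y$ and $\omega_R(x)>\omega_R(y)$; for $s\in R$, an $(R,\omega_R;s)$-partition is an $(R,\omega_R)$-partition with $f(s)\le f(t)$ for all $t\in R$ and such that $f(s)=f(t)$, $t\ne s$, implies $\omega_R(s)>\omega_R(t)$. The size of $f$ is $\sum_{t\in R}f(t)$. $G_{P+Q;s}(q)$ is the generating function (by size) of $(P+Q,\omega;s)$-partitions; $G_{P;s}(q)$ that of $(P,\omega|_P;s)$-partitions; $G_Q(q)$ that of $(Q,\omega|_Q)$-partitions. *)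

(* Defs.v *)
From mathcomp Require Import all_boot all_order all_algebra.
Set Implicit Arguments. Unset Strict Implicit. Unset Printing Implicit Defensive.
Import Order.TTheory GRing.Theory Num.Theory.

Definition is_poset (T : finType) (le : rel T) : Prop :=
  [/\ reflexive le, antisymmetric le & transitive le].

Definition sum_le (P Q : finType) (leP : rel P) (leQ : rel Q) : rel (P + Q)%type :=
  fun a b => match a, b with
             | inl x, inl y => leP x y
             | inr x, inr y => leQ x y
             | _, _ => false
             end.

Definition is_RPart (R : finType) (le : rel R) (om : R -> int) (f : R -> nat) : bool :=
  [forall x, forall y, le x y ==> ((f y <= f x)%N && ((om y < om x)%R ==> (f y < f x)%N))].

Definition is_RsPart (R : finType) (le : rel R) (om : R -> int) (s : R)
    (f : R -> nat) : bool :=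
  [&& is_RPart le om f,
      [forall t, (f s <= f t)%N] &
      [forall t, ((t != s) && (f s == f t)) ==> (om t < om s)%R]].

(* Number of functions R -> nat of size N satisfying the predicate Pf.
   Any f of size N takes values <= N, so it is represented in
   {ffun R -> 'I_N.+1}. *)
Definition count_size (R : finType) (Pf : (R -> nat) -> bool) (N : nat) : nat :=
  #|[pred g : {ffun R -> 'I_N.+1} |
      Pf (fun x => nat_of_ord (g x)) && ((\sum_x nat_of_ord (g x))%N == N)]|.

(* Formal power series in q with integer coefficients, as coefficient sequences. *)
Definition series := nat -> int.

Definition G_part (R : finType) (le : rel R) (om : R -> int) : series :=
  fun N => Posz (count_size (is_RPart le om) N).

Definition G_spart (R : finType) (le : rel R) (om : R -> int) (s : R) : series :=
  fun N => Posz (count_size (is_RsPart le om s) N).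

Definition series_mul (A B : series) : series :=
  fun N => (\sum_(i < N.+1) A i * B (N - i)%N)%R.

(* multiplication by (1 - q^m) *)
Definition one_minus_qpow (m : nat) (A : series) : series :=
  fun N => (A N - (if (m <= N)%N then A (N - m)%N else 0))%R.

(* Main.v *)
From Pilot Require Import Defs.
From mathcomp Require Import all_boot all_order all_algebra.
From mathcomp Require Import zify.
From Stdlib Require Import FunctionalExtensionality.
Import Order.TTheory GRing.Theory Num.Theory.
Set Implicit Arguments. Unset Strict Implicit.

Lemma card_bij (A B : finType) (pA : {pred A}) (pB : {pred B}) (f : A -> B) (g : B -> A) :
  (forall x, x \in pA -> f x \in pB) -> (forall y, y \in pB -> g y \in pA) ->
  (forall x, x \in pA -> g (f x) = x) -> (forall y, y \in pB -> f (g y) = y) ->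
  #|pA| = #|pB|.
Proof.
move=> fAB gBA gf fg.
have H1 (X Y : finType) (pX : {pred X}) (pY : {pred Y}) (u : X -> Y) (v : Y -> X) :
  (forall x, x \in pX -> u x \in pY) -> (forall x, x \in pX -> v (u x) = x) -> #|pX| <= #|pY|.
  move=> uXY vu.
  have inj : {in pX &, injective u}.
    by move=> x y hx hy e; rewrite -(vu x hx) -(vu y hy) e.
  rewrite -(card_in_imset inj); apply: subset_leq_card; apply/subsetP => z /imsetP [x hx ->].
  exact: uXY.
by apply/eqP; rewrite eqn_leq (H1 _ _ _ _ f g) ?(H1 _ _ _ _ g f).
Qed.

Lemma le_sum (T : finType) (F : T -> nat) x : F x <= \sum_y F y.
Proof. by rewrite (bigD1 x) //= leq_addr. Qed.

Lemma sum_shift (R : finType) (F : R -> nat) :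
  (forall x, 0 < F x) -> \sum_x F x = #|R| + \sum_x (F x - 1).
Proof.
move=> h; rewrite -sum1_card -big_split /=; apply: eq_bigr => x _.
by rewrite subnKC.
Qed.

Lemma RsPart_shift (R : finType) le (om : R -> int) s c (k : R -> nat) :
  is_RsPart le om s (fun x => c + k x) = is_RsPart le om s k.
Proof.
rewrite /is_RsPart /is_RPart; congr [&& _, _ & _]; apply: eq_forallb => x.
- by apply: eq_forallb => y; rewrite leq_add2l ltn_add2l.
- by rewrite leq_add2l.
- by rewrite eqn_add2l.
Qed.

Definition cnt (R : finType) (M : nat) (Pf : (R -> nat) -> bool) (N : nat) :=
 #|[pred g : {ffun R -> 'I_M.+1} | Pf (fun x => nat_of_ord (g x)) &&
     ((\sum_x nat_of_ord (g x))%N == N)]|.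

Lemma predE (R : finType) M Pf N (g : {ffun R -> 'I_M}) (F : R -> nat) :
  (forall x, nat_of_ord (g x) = F x) ->
  (Pf (fun x => nat_of_ord (g x)) && ((\sum_x nat_of_ord (g x))%N == N)) =
  (Pf F && ((\sum_x F x)%N == N)).
Proof.
move=> h; have -> : (fun x => nat_of_ord (g x)) = F by apply: functional_extensionality.
by rewrite (eq_bigr _ (fun x _ => h x)).
Qed.

Lemma cnt_bound (R : finType) M Pf N : N <= M -> cnt M Pf N = @cnt R N Pf N.
Proof.
move=> hNM; have hNM' : N.+1 <= M.+1 by [].
rewrite /cnt.
have hb (g : {ffun R -> 'I_M.+1}) x : \sum_x nat_of_ord (g x) == N -> g x < N.+1.
  by move=> /eqP hs; rewrite ltnS -hs (le_sum (fun x => nat_of_ord (g x))).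
apply: (@card_bij _ _ _ _ (fun g : {ffun R -> 'I_M.+1} => [ffun x => inord (g x) : 'I_N.+1])
                 (fun g : {ffun R -> 'I_N.+1} => [ffun x => widen_ord hNM' (g x)])).
- move=> g; rewrite !inE => /andP[h1 h2].
  by rewrite (@predE _ _ _ _ _ (fun x => nat_of_ord (g x))) ?h1 // => x; rewrite ffunE inordK ?hb.
- move=> g; rewrite !inE => /andP[h1 h2].
  by rewrite (@predE _ _ _ _ _ (fun x => nat_of_ord (g x))) ?h1 // => x; rewrite ffunE.
- move=> g; rewrite !inE => /andP[h1 h2]; apply/ffunP => x; rewrite !ffunE; apply: val_inj => /=.
  by rewrite inordK ?hb.
- move=> g _; apply/ffunP => x; rewrite !ffunE; apply: val_inj => /=.
  by rewrite inordK.
Qed.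
Notation csize := Pilot.Defs.count_size.

Lemma L1 (R : finType) le (om : R -> int) s N :
  csize (is_RsPart le om s) N =
  csize (fun f => is_RsPart le om s f && (f s == 0)) N +
  (if #|R| <= N then csize (is_RsPart le om s) (N - #|R|) else 0).
Proof.
rewrite /csize /Defs.count_size.
set pS := [pred g : {ffun R -> 'I_N.+1} | _].
rewrite -(cardID [pred g : {ffun R -> 'I_N.+1} | nat_of_ord (g s) == 0] pS).
have pos (g : {ffun R -> 'I_N.+1}) : g \in [predD pS & [pred g : {ffun R -> 'I_N.+1} | nat_of_ord (g s) == 0]] ->
   forall x, 0 < g x.
  rewrite !inE => /andP[hs0 /andP[/and3P[_ /forallP hm _] _]] x.
  by apply: leq_trans (hm x); rewrite lt0n.
congr (_ + _).
  apply: eq_card => g; rewrite !inE.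
  by case: (is_RsPart _ _ _ _); case: (_ == N); case: (_ == 0).
case: leqP => hn; last first.
  apply: eq_card0 => g; apply/negP => hg.
  have := pos g hg; move: hg; rewrite !inE => /andP[_ /andP[_ /eqP hsum]] hp.
  move: hn; rewrite -hsum (sum_shift hp); lia.
have hn0 : 0 < #|R| by apply/card_gt0P; exists s.
have hb (g : {ffun R -> 'I_N.+1}) x : g \in [predD pS & [pred g : {ffun R -> 'I_N.+1} | nat_of_ord (g s) == 0]] ->
   g x - 1 < (N - #|R|).+1.
  move=> hg; have := pos g hg; move: hg; rewrite !inE => /andP[_ /andP[_ /eqP hsum]] hp.
  move: hsum; rewrite (sum_shift hp) => hsum.
  have hle : g x - 1 <= \sum_y (g y - 1) := le_sum (fun x => nat_of_ord (g x) - 1) x.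
  lia.
apply: (@card_bij _ _ _ _ (fun g : {ffun R -> 'I_N.+1} => [ffun x => inord (g x - 1) : 'I_(N - #|R|).+1])
                 (fun g : {ffun R -> 'I_(N - #|R|).+1} => [ffun x => inord (g x).+1 : 'I_N.+1])).
- move=> g hg; have := pos g hg; have hb' := hb g _ hg; move: hg.
  rewrite !inE => /andP[_ /andP[h1 /eqP h2]] hp.
  rewrite (@predE _ _ _ _ _ (fun x => nat_of_ord (g x) - 1)); last first.
    by move=> x; rewrite ffunE inordK.
  move: h1 h2; rewrite (sum_shift hp).
  have -> : (fun x => nat_of_ord (g x)) = (fun x => 1 + (nat_of_ord (g x) - 1)).
    by apply: functional_extensionality => x; rewrite subnKC.
  rewrite RsPart_shift => -> h2 /=; by rewrite -(eqn_add2l #|R|) h2 subnKC.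
- move=> g; rewrite !inE => /andP[h1 /eqP h2].
  have hv x : nat_of_ord ([ffun x => inord (g x).+1 : 'I_N.+1] x) = 1 + g x.
    rewrite ffunE inordK ?add1n //; have := ltn_ord (g x); move: (nat_of_ord (g x)) => a; lia.
  rewrite ffunE inordK; last by have := ltn_ord (g s); move: (nat_of_ord (g s)) => a; lia.
  rewrite /= (@predE _ _ _ _ _ (fun x => 1 + nat_of_ord (g x))) // RsPart_shift h1 /=.
  by rewrite big_split /= sum1_card h2 subnKC.
- move=> g hg; apply/ffunP => x; have := pos g hg x; have := hb g x hg => hb' hp.
  rewrite !ffunE; apply: val_inj => /=.
  by rewrite inordK // inordK // subn1 prednK.
- move=> g _; apply/ffunP => x; rewrite !ffunE; apply: val_inj => /=.
  have h1 : (g x).+1 < N.+1 by have := ltn_ord (g x); move: (nat_of_ord (g x)) => a; lia.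
  by rewrite (inordK h1) subn1 /= inordK.
Qed.

Lemma sum_RsPart_split (P Q : finType) (leP : rel P) (leQ : rel Q) (om : (P + Q)%type -> int) s
  (h : (P + Q)%type -> nat) :
  (forall t : Q, (om (inr t) < om (inl s))%R) -> h (inl s) = 0 ->
  is_RsPart (sum_le leP leQ) om (inl s) h =
  is_RsPart leP (fun x => om (inl x)) s (fun x => h (inl x)) &&
  is_RPart leQ (fun y => om (inr y)) (fun y => h (inr y)).
Proof.
move=> hQ h0; rewrite /is_RsPart.
have -> : [forall t, h (inl s) <= h t] = true by apply/forallP => t; rewrite h0.
have -> : [forall t : P, h (inl s) <= h (inl t)] = true by apply/forallP => t; rewrite h0.
have eR : is_RPart (sum_le leP leQ) om h =
   is_RPart leP (fun x => om (inl x)) (fun x => h (inl x)) &&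
   is_RPart leQ (fun y => om (inr y)) (fun y => h (inr y)).
  apply/idP/andP.
  - move/forallP => H; split; apply/forallP => x; apply/forallP => y.
    + exact: (forallP (H (inl x)) (inl y)).
    + exact: (forallP (H (inr x)) (inr y)).
  - case=> /forallP H1 /forallP H2; apply/forallP => -[x|x]; apply/forallP => -[y|y] //=.
    + exact: (forallP (H1 x) y).
    + exact: (forallP (H2 x) y).
have eT : [forall t, (t != inl s) && (h (inl s) == h t) ==> (om t < om (inl s))%R] =
          [forall t : P, (t != s) && (h (inl s) == h (inl t)) ==> (om (inl t) < om (inl s))%R].
  apply/forallP/forallP => H.
  - move=> t; exact: (H (inl t)).
  - by move=> [t|t]; [exact: (H t) | rewrite hQ implybT].
rewrite eR eT.
by case: (is_RPart leP _ _); case: (is_RPart leQ _ _); case: [forall t : P, _].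
Qed.

Lemma keyN N (i : 'I_N.+1) u v :
  (u + v == N) && (inord u == i) = (u == i) && (v == N - i).
Proof.
have hi := ltn_ord i; move: (i) hi => i0 hi.
apply/andP/andP => [[/eqP huv /eqP hi']|[/eqP hu /eqP hv]].
- have hu : u < N.+1 by lia.
  have := congr1 val hi'; rewrite /= inordK // => {}hi'.
  move: (nat_of_ord i0) hi hi' => j hj hj'.
  split; apply/eqP; lia.
- split.
  + apply/eqP; move: hu hv; move: (nat_of_ord i0) hi => j hj; lia.
  + apply/eqP; apply: val_inj; rewrite /= inordK //; lia.
Qed.

Lemma ffvalE (A B : finType) M (F : A -> B) (g : {ffun B -> 'I_M}) :
  (fun x => nat_of_ord ([ffun x => g (F x)] x)) = (fun x => nat_of_ord (g (F x))).
Proof. by apply: functional_extensionality => x; rewrite ffunE. Qed.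

Lemma ffsumE (A B : finType) M (F : A -> B) (g : {ffun B -> 'I_M}) :
  \sum_x nat_of_ord ([ffun x => g (F x)] x) = \sum_x nat_of_ord (g (F x)).
Proof. by apply: eq_bigr => x _; rewrite ffunE. Qed.

Lemma cardX_pred (A B : finType) (pa : {pred A}) (pb : {pred B}) :
  #|[pred ab : A * B | (ab.1 \in pa) && (ab.2 \in pb)]| = #|pa| * #|pb|.
Proof. by rewrite -(cardsE pa) -(cardsE pb) -cardsX; apply: eq_card => -[a b]; rewrite !inE. Qed.

Lemma L2 (P Q : finType) (leP : rel P) (leQ : rel Q) (om : (P + Q)%type -> int) s N :
  (forall t : Q, (om (inr t) < om (inl s))%R) ->
  csize (fun f => is_RsPart (sum_le leP leQ) om (inl s) f && (f (inl s) == 0)) N =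
  \sum_(i < N.+1) csize (fun f => is_RsPart leP (fun x => om (inl x)) s f && (f s == 0)) i *
                  csize (is_RPart leQ (fun y => om (inr y))) (N - i).
Proof.
move=> hQ.
pose pT := [pred ab : {ffun P -> 'I_N.+1} * {ffun Q -> 'I_N.+1} |
  [&& is_RsPart leP (fun x => om (inl x)) s (fun x => nat_of_ord (ab.1 x)) && (nat_of_ord (ab.1 s) == 0),
      is_RPart leQ (fun y => om (inr y)) (fun y => nat_of_ord (ab.2 y)) &
      (\sum_x nat_of_ord (ab.1 x)) + (\sum_y nat_of_ord (ab.2 y)) == N]].
transitivity #|pT|.
  rewrite /csize /Defs.count_size.
  apply: (@card_bij _ _ _ pT
     (fun g : {ffun (P + Q)%type -> 'I_N.+1} => ([ffun x => g (inl x)], [ffun y => g (inr y)]))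
     (fun ab : {ffun P -> 'I_N.+1} * {ffun Q -> 'I_N.+1} => [ffun z : (P + Q)%type => match z with inl x => ab.1 x | inr y => ab.2 y end])).
  - move=> g; rewrite !inE => /andP[/andP[hR h0] hs] /=.
    rewrite !ffvalE !ffsumE ffunE h0 andbT.
    rewrite sum_RsPart_split ?(eqP h0) // in hR.
    by case/andP: hR => -> ->; move: hs; rewrite big_sumType.
  - move=> [a b]; rewrite !inE /= => /and3P[/andP[hR h0] hRQ hs].
    rewrite (@predE _ _ (fun f => is_RsPart (sum_le leP leQ) om (inl s) f && (f (inl s) == 0)) _ _ (fun z => match z with inl x => nat_of_ord (a x) | inr y => nat_of_ord (b y) end)); last first.
      by move=> [x|y]; rewrite ffunE.
    rewrite /= h0 andbT sum_RsPart_split ?(eqP h0) //= hR hRQ /=.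
    by rewrite big_sumType.
  - move=> g _; apply/ffunP => -[x|y]; by rewrite !ffunE.
  - move=> [a b] _ /=; congr (_, _); apply/ffunP => x; by rewrite !ffunE.
rewrite -sum1_card (partition_big (fun ab : {ffun P -> 'I_N.+1} * {ffun Q -> 'I_N.+1} => inord (\sum_x nat_of_ord (ab.1 x)) : 'I_N.+1) predT) //=.
apply: eq_bigr => i _; rewrite sum1dep_card.
have hi : i <= N by rewrite -ltnS.
have eA : cnt N (fun f => is_RsPart leP (fun x => om (inl x)) s f && (f s == 0)) i =
   csize (fun f => is_RsPart leP (fun x => om (inl x)) s f && (f s == 0)) i := @cnt_bound _ _ _ _ hi.
have eB : cnt N (is_RPart leQ (fun y => om (inr y))) (N - i) =
   csize (is_RPart leQ (fun y => om (inr y))) (N - i) := @cnt_bound _ _ _ _ (leq_subr _ _).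
rewrite -eA -eB /cnt.
rewrite -cardX_pred; apply: eq_card => -[a b]; rewrite !inE /=.
rewrite -!andbA keyN.
by case: (is_RPart _ _ _); case: (_ == nat_of_ord i); rewrite ?andbF.
Qed.

Theorem lemma3p4 (P Q : finType) (leP : rel P) (leQ : rel Q)
    (om : (P + Q)%type -> int) (s : P) :
  is_poset leP -> is_poset leQ ->
  injective om ->
  (forall x, (1 <= om x <= Posz #|{: (P + Q)%type}|)%R) ->
  (forall t : Q, (om (inr t) < om (inl s))%R) ->
  forall N : nat,
    one_minus_qpow #|{: (P + Q)%type}| (G_spart (sum_le leP leQ) om (inl s)) N =
    series_mul (one_minus_qpow #|P| (G_spart leP (fun x => om (inl x)) s))
               (G_part leQ (fun y => om (inr y))) N.
Proof.
move=> _ _ _ _ hQ N.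
rewrite /one_minus_qpow /series_mul /G_spart /G_part.
rewrite (L1 (sum_le leP leQ) om (inl s) N).
have -> : forall a b : nat, forall c : bool, (Posz (a + (if c then b else 0)) - (if c then Posz b else 0) = Posz a)%R.
  by move=> a b [|]; rewrite ?PoszD ?addrK ?addn0 ?subr0.
rewrite L2 //.
rewrite (big_morph Posz PoszD (erefl (Posz 0))).
apply: eq_bigr => i _; rewrite PoszM; congr (_ * _)%R.
by rewrite L1; case: ifP => _; rewrite ?PoszD ?addrK ?addn0 ?subr0.
Qed.
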